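(* Let $V$ be a vector space over a field $\mathbb{K}$ (of arbitrary characteristic, not necessarily finite-dimensional), let $F$ be a bilinear form on $V$, and let $f\in V^*$. For every $p\ge 0$ and every $u\in \mathcal{T}^p(V)$ we have $$ i_f\circ \Lambda_F(u)=\Lambda_F(i_f(u))+(-1)^p\,\Lambda_F(u)\circ i_f $$ as endomorphisms of $\mathcal{T}(V)$.
   Context: $\mathcal{T}(V)=\bigoplus_{p\ge0}\mathcal{T}^p(V)$ is the tensor algebra of $V$ with product $\otimes$, $\mathcal{T}^0(V)=\mathbb{K}$, $\mathcal{T}^1(V)=V$. For $x\in V$, $e_x\in\mathrm{End}(\mathcal{T}(V))$ is $e_x(u)=x\otimes u$. For $f\in V^*$, $i_f$ is the unique linear map $\mathcal{T}(V)\to\mathcal{T}(V)$ with $i_f(1)=0$ and $i_f(x\otimes u)=f(x)u-x\otimes i_f(u)$ for $x\in V$, $u\in\mathcal{T}(V)$; explicitly $i_f(x_1\otimes\cdots\otimes x_p)=\sum_{i=1}^p(-1)^{i-1}f(x_i)\,x_1\otimes\cdots\otimes\widehat{x_i}\otimes\cdots\otimes x_p$. It satisfies $i_f i_g+i_g i_f=0$ for $f,g\in V^*$. For a bilinear form $F$ and $x\in V$, $i_x^F:=i_{f_x}$ where $f_x(y)=F(x,y)$. $\Lambda_F:\mathcal{T}(V)\to\mathrm{End}(\mathcal{T}(V))$ is the unique unital algebra homomorphism with $\Lambda_F(x)=e_x+i_x^F$ for $x\in V$. *)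

(* Defs.v *)
From HB Require Import structures.
From mathcomp Require Import all_boot all_order all_algebra.
Set Implicit Arguments. Unset Strict Implicit. Unset Printing Implicit Defensive.
Import Order.TTheory GRing.Theory Num.Theory.
Local Open Scope ring_scope.

Section TensorDefs.
Variable K : fieldType.

Definition lin_map (U W : lmodType K) (h : U -> W) : Prop :=
  forall (a : K) (u v : U), h (a *: u + v) = a *: h u + h v.

Definition lin_form (V : lmodType K) (f : V -> K) : Prop :=
  forall (a : K) (u v : V), f (a *: u + v) = a * f u + f v.

Definition bilinear_form (V : lmodType K) (F : V -> V -> K) : Prop :=
  (forall x, lin_form (F x)) /\ (forall y, lin_form (fun x => F x y)).

Definition alg_hom (A B : algType K) (h : A -> B) : Prop :=
  [/\ lin_map h, h 1 = 1 & forall a b, h (a * b) = h a * h b].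

Definition is_tensor_algebra (V : lmodType K) (A : algType K) (iota : V -> A)
  : Prop :=
  lin_map iota /\
  forall (B : algType K) (phi : V -> B), lin_map phi ->
    (exists h : A -> B, alg_hom h /\ forall x, h (iota x) = phi x) /\
    (forall h1 h2 : A -> B,
        alg_hom h1 -> (forall x, h1 (iota x) = phi x) ->
        alg_hom h2 -> (forall x, h2 (iota x) = phi x) -> h1 =1 h2).

Definition homog (V : lmodType K) (A : algType K) (iota : V -> A) (p : nat)
  (u : A) : Prop :=
  exists s : seq (K * seq V),
    all (fun t => size t.2 == p) s /\
    u = \sum_(t <- s) t.1 *: \prod_(x <- t.2) iota x.

Definition is_interior (V : lmodType K) (A : algType K) (iota : V -> A)
  (f : V -> K) (j : A -> A) : Prop :=
  [/\ lin_map j, j 1 = 0 &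
      forall (x : V) (u : A), j (iota x * u) = f x *: u - iota x * j u].

(* L is Lambda_F : T(V) -> End(T(V)), the unique unital algebra homomorphism
   with L(x) = e_x + i^F_x, where i gives the interior products i_f. *)
Definition is_Lambda (V : lmodType K) (A : algType K) (iota : V -> A)
  (F : V -> V -> K) (i : (V -> K) -> A -> A) (L : A -> A -> A) : Prop :=
  [/\ (forall u, lin_map (L u)),
      (forall (a : K) (u v : A) (w : A), L (a *: u + v) w = a *: L u w + L v w),
      (forall w, L 1 w = w),
      (forall u v w, L (u * v) w = L u (L v w)) &
      (forall x w, L (iota x) w = iota x * w + i (F x) w)].

End TensorDefs.

(* Main.v *)
Require Import Defs.
Set Implicit Arguments. Unset Strict Implicit.
From HB Require Import structures.
From mathcomp Require Import all_boot all_order all_algebra.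
From Stdlib Require Import ClassicalEpsilon.
Import GRing.Theory.
Local Open Scope ring_scope.

Section Span.
Variables (K : fieldType) (V : lmodType K) (A : algType K) (iota : V -> A).

Definition span_prop (a : A) : Prop :=
  exists s : seq (K * seq V), a = \sum_(t <- s) t.1 *: \prod_(x <- t.2) iota x.

Definition spanb (a : A) : bool :=
  if excluded_middle_informative (span_prop a) then true else false.

Lemma spanbP a : reflect (span_prop a) (spanb a).
Proof. rewrite /spanb; case: excluded_middle_informative => h; by constructor. Qed.

Lemma spanb_closed : GRing.subsemialg_closed (spanb : {pred A}).
Proof.
split.
- apply/spanbP; exists [:: (1, [::])]; by rewrite big_seq1 big_nil scale1r.
- split.
  + apply/spanbP; exists [::]; by rewrite big_nil.
  + move=> u v /spanbP [s1 ->] /spanbP [s2 ->]; apply/spanbP.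
    exists (s1 ++ s2); by rewrite big_cat.
- move=> a u /spanbP [s1 ->]; apply/spanbP.
  exists [seq (a * t.1, t.2) | t <- s1]; rewrite big_map scaler_sumr.
  by apply: eq_bigr => t _ /=; rewrite scalerA.
- move=> u v /spanbP [s1 ->] /spanbP [s2 ->]; apply/spanbP.
  exists [seq (t1.1 * t2.1, t1.2 ++ t2.2) | t1 <- s1, t2 <- s2].
  rewrite big_allpairs_dep mulr_suml; apply: eq_bigr => t1 _.
  rewrite mulr_sumr; apply: eq_bigr => t2 _ /=.
  by rewrite big_cat -scalerAl -scalerAr scalerA.
Qed.

Definition spanT : Type := {a : A | spanb a}.
HB.instance Definition _ := [isSub for (@sval A spanb) : spanT -> A].
HB.instance Definition _ := [Choice of spanT by <:].
HB.instance Definition _ := GRing.SubChoice_isSubAlgebra.Build K A spanb spanT spanb_closed.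

Lemma val_lin (a : K) (u v : spanT) : val (a *: u + v) = a *: val u + val v.
Proof. rewrite raddfD /=; congr (_ + _); exact: (linearZ (val : spanT -> A)). Qed.
Lemma val_mul (u v : spanT) : val (u * v) = val u * val v.
Proof. by rewrite rmorphM. Qed.
Lemma val_one : val (1 : spanT) = 1.
Proof. by rewrite rmorph1. Qed.
End Span.

Section Lin.
Variables (K : fieldType) (U W : lmodType K) (h : U -> W).
Hypothesis H : lin_map h.
Lemma lin0 : h 0 = 0.
Proof. by move: (H (-1) 0 0); rewrite scaler0 addr0 scaleN1r addNr. Qed.
Lemma linD u v : h (u + v) = h u + h v.
Proof. by move: (H 1 u v); rewrite !scale1r. Qed.
Lemma linZ a u : h (a *: u) = a *: h u.
Proof. by move: (H a u 0); rewrite !addr0 lin0 addr0. Qed.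
Lemma linN u : h (- u) = - h u.
Proof. by rewrite -scaleN1r linZ scaleN1r. Qed.
Lemma linB u v : h (u - v) = h u - h v.
Proof. by rewrite linD linN. Qed.
Lemma lin_sum (I : Type) (s : seq I) (G : I -> U) :
  h (\sum_(t <- s) G t) = \sum_(t <- s) h (G t).
Proof.
elim: s => [|t s IH]; first by rewrite !big_nil lin0.
by rewrite !big_cons linD IH.
Qed.
End Lin.

Lemma spanning (K : fieldType) (V : lmodType K) (A : algType K) (iota : V -> A) :
  is_tensor_algebra iota -> forall a, span_prop iota a.
Proof.
case=> liniota univ a.
have Px : forall x, spanb iota (iota x).
  move=> x; apply/spanbP; exists [:: (1, [:: x])].
  by rewrite big_seq1 /= big_seq1 scale1r.
pose phi (x : V) : spanT iota := exist _ (iota x) (Px x).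
have linphi : lin_map phi.
  move=> b u v; apply: val_inj; by rewrite val_lin /= liniota.
have [[h [[linh h1 hM] hiota]] _] := univ (spanT iota) phi linphi.
have [_ uniq] := univ A iota liniota.
have ah : alg_hom (fun a => val (h a)).
  split.
  + by move=> b u v; rewrite linh val_lin.
  + by rewrite h1 val_one.
  + by move=> u v; rewrite hM val_mul.
have aid : alg_hom (@id A) by [].
have e := uniq (fun a => val (h a)) id ah (fun x => congr1 val (hiota x)) aid (fun x => erefl).
rewrite -(e a); apply/spanbP; exact: valP.
Qed.

Lemma anti_prod (K : fieldType) (V : lmodType K) (A : algType K) (iota : V -> A)
  (f g : V -> K) (j1 j2 : A -> A) :
  is_interior iota f j1 -> is_interior iota g j2 ->
  forall l : seq V, j1 (j2 (\prod_(x <- l) iota x)) = - j2 (j1 (\prod_(x <- l) iota x)).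
Proof.
case=> l1 z1 c1 [l2 z2 c2]; elim=> [|x l IH].
  by rewrite big_nil z1 z2 (lin0 l1) (lin0 l2) oppr0.
rewrite big_cons c1 c2 (linB l1) (linB l2) (linZ l1) (linZ l2) c1 c2 IH.
by rewrite mulrN !opprB addrA.
Qed.

Lemma anti (K : fieldType) (V : lmodType K) (A : algType K) (iota : V -> A)
  (f g : V -> K) (j1 j2 : A -> A) :
  is_tensor_algebra iota ->
  is_interior iota f j1 -> is_interior iota g j2 ->
  forall w, j1 (j2 w) = - j2 (j1 w).
Proof.
move=> T H1 H2 w; have [s ->] := spanning T w.
case: (H1) => l1 _ _; case: (H2) => l2 _ _.
rewrite (lin_sum l2) (lin_sum l1) (lin_sum l1) (lin_sum l2) -sumrN.
apply: eq_bigr => t _.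
by rewrite (linZ l2) (linZ l1) (linZ l1) (linZ l2) (anti_prod H1 H2) scalerN.
Qed.

Theorem mainTheorem1 (K : fieldType) (V : lmodType K) (A : algType K)
  (iota : V -> A) (F : V -> V -> K) (i : (V -> K) -> A -> A)
  (L : A -> A -> A) (f : V -> K) :
  is_tensor_algebra iota ->
  bilinear_form F ->
  (forall g : V -> K, lin_form g -> is_interior iota g (i g)) ->
  is_Lambda iota F i L ->
  lin_form f ->
  forall (p : nat) (u : A), homog iota p u ->
  forall w : A, i f (L u w) = L (i f u) w + (-1) ^+ p *: L u (i f w).
Proof.
move=> T [BF _] Hi [Llin Lu L1 LM Liota] hf p u [s [sz ->]] w.
have If := Hi f hf; case: (If) => lf zf cf.
have Lw : forall w, lin_map (fun u => L u w).
  by move=> w' a u1 u2; rewrite Lu.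
have key : forall (l : seq V) w,
  i f (L (\prod_(x <- l) iota x) w) =
  L (i f (\prod_(x <- l) iota x)) w + (-1) ^+ (size l) *: L (\prod_(x <- l) iota x) (i f w).
  elim=> [|x l IH] w'.
    by rewrite big_nil zf L1 (lin0 (Lw w')) add0r expr0 scale1r L1.
  have Ig := Hi (F x) (BF x); case: (Ig) => lg zg cg.
  rewrite big_cons LM Liota (linD lf) cf IH (anti T If Ig) IH (linD lg) (linZ lg).
  rewrite cf (linB (Lw w')) (linZ (Lw w')) !LM !Liota /= exprS mulN1r scaleNr.
  rewrite mulrDr scalerDr -scalerAr.
  by rewrite !opprD !addrA; congr (_ + _); exact: addrAC.
pose G (t : K * seq V) := t.1 *: \prod_(x <- t.2) iota x.
rewrite (lin_sum (Lw w) s G) (lin_sum lf s (fun t => L (G t) w)) (lin_sum lf s G) (lin_sum (Lw w) s (fun t => i f (G t))) (lin_sum (Lw (i f w)) s G).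
rewrite scaler_sumr -big_split /= big_seq [in RHS]big_seq; apply: eq_bigr => t ts.
have /eqP <- := allP sz t ts.
by rewrite /G (linZ lf) !(linZ (Lw w)) (linZ (Lw (i f w))) (linZ lf) key scalerDr !scalerA mulrC.
Qed.
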